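(* The length complexity of $\mathsf{C\text{-}RASP}$ (with $\mathsf{C\text{-}RASP}$ programs as representations of languages and program size as descriptional complexity) is not computably bounded; that is, there is no computable function $g:\mathbb{N}\to\mathbb{N}$ with $f(c)\le g(c)$ for all $c$, where $f$ is the length complexity.
   Context: $\mathsf{C\text{-}RASP}$ formulas over a finite alphabet $\Sigma$: $\phi ::= \sigma \mid \Diamond^{-}\phi \mid \Box^{-}\phi \mid \neg\phi \mid \phi_1\wedge\phi_2 \mid \sum_{t\in\mathcal{T}}\alpha_t t\sim k$, terms $t ::= \#[\phi] \mid c$, with $\sigma\in\Sigma$, $\alpha_t,k,c\in\mathbb{Z}$, ${\sim}\in\{<,\le,=,\ge,>\}$. Semantics at position $i$ of $w=w_1\cdots w_n$: $w,i\models\sigma$ iff $w_i=\sigma$; Boolean connectives as usual; $w,i\models\Diamond^{-}\phi$ iff $w,j\models\phi$ for some $j<i$; $w,i\models\Box^{-}\phi$ iff $w,j\models\phi$ for all $j\le i$; $\#[\phi]$ evaluates to $|\{j\in[1,i]: w,j\models\phi\}|$, $c$ to $c$, comparisons are integer comparisons. $w\models\phi$ iff $w,|w|\models\phi$; $L(\phi)=\{w:w\models\phi\}$. Programs are straight-line (DAG) representations $(\phi_1,\dots,\phi_n)$ where $\phi_i$ may refer to $\phi_j$, $j<i$; the size of a program is its total number of symbols, with constants written in binary and each reference to an earlier line counting as size 1. The length complexity is the function $f:\mathbb N\to\mathbb N$ given by $f(c)=\max\{\min\{|w| : w\in L(E)\setminus L(E')\} : E,E' \text{ programs of size}\le c,\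 L(E)\setminus L(E')\neq\emptyset\}$, i.e. the least bound such that any two programs of size at most $c$ defining different languages are distinguished by a string of length at most $f(c)$. *)

(* Defs.v *)
From mathcomp Require Import all_boot all_order all_algebra.
Set Implicit Arguments. Unset Strict Implicit. Unset Printing Implicit Defensive.
Import Order.TTheory GRing.Theory Num.Theory.

(* Syntax of C-RASP formulas, extended with references [FRef j] to an *)
(* earlier line j (0-indexed) of a straight-line program.             *)

Inductive cmp := CLt | CLe | CEq | CGe | CGt.

Inductive form (Sigma : Type) :=
| FSym of Sigma
| FDia of form Sigma
| FBox of form Sigma
| FNot of form Sigma
| FAnd of form Sigma & form Sigma
| FCmp of seq (int * term Sigma) & cmp & int
| FRef of nat
with term (Sigma : Type) :=
| TCount of form Sigma
| TConst of int.

Arguments FSym {Sigma}. Arguments FDia {Sigma}. Arguments FBox {Sigma}.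
Arguments FNot {Sigma}. Arguments FAnd {Sigma}. Arguments FCmp {Sigma}.
Arguments FRef {Sigma}. Arguments TCount {Sigma}. Arguments TConst {Sigma}.

Definition cmpb (o : cmp) (a b : int) : bool :=
  match o with
  | CLt => (a < b)%R | CLe => (a <= b)%R | CEq => a == b
  | CGe => (a >= b)%R | CGt => (a > b)%R
  end.

(* Semantics at position i (1-indexed) of w; [env j p] is the truth value
   of the earlier program line j at position p. *)
Fixpoint eval (Sigma : eqType) (env : nat -> nat -> bool) (w : seq Sigma)
    (phi : form Sigma) (i : nat) {struct phi} : bool :=
  match phi with
  | FSym s => (0 < i) && (nth None (map Some w) i.-1 == Some s)
  | FDia p => has (fun j => eval env w p j) (iota 1 i.-1)
  | FBox p => all (fun j => eval env w p j) (iota 1 i)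
  | FNot p => ~~ eval env w p i
  | FAnd p q => eval env w p i && eval env w q i
  | FCmp ts o k =>
      cmpb o ((fix sumt (ts : seq (int * term Sigma)) : int :=
                 match ts with
                 | [::] => 0%R
                 | (a, t) :: ts' => (a * eval_term env w t i + sumt ts')%R
                 end) ts) k
  | FRef j => env j i
  end
with eval_term (Sigma : eqType) (env : nat -> nat -> bool) (w : seq Sigma)
    (t : term Sigma) (i : nat) {struct t} : int :=
  match t with
  | TCount p => (count (fun j => eval env w p j) (iota 1 i))%:Z
  | TConst c => c
  end.

Fixpoint refs_ok (Sigma : Type) (n : nat) (phi : form Sigma) {struct phi} : bool :=
  match phi with
  | FSym _ => true
  | FDia p | FBox p | FNot p => refs_ok n p
  | FAnd p q => refs_ok n p && refs_ok n q
  | FCmp ts _ _ =>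
      (fix allt (ts : seq (int * term Sigma)) : bool :=
         match ts with
         | [::] => true
         | (_, t) :: ts' => refs_ok_term n t && allt ts'
         end) ts
  | FRef j => j < n
  end
with refs_ok_term (Sigma : Type) (n : nat) (t : term Sigma) {struct t} : bool :=
  match t with
  | TCount p => refs_ok n p
  | TConst _ => true
  end.

(* Size: constants in binary (bits of |z| plus a sign symbol),        *)
(* each symbol 1, each reference 1.                                   *)

Definition int_size (z : int) : nat := (trunc_log 2 `|z|%N).+2.

Fixpoint fsize (Sigma : Type) (phi : form Sigma) {struct phi} : nat :=
  match phi with
  | FSym _ => 1
  | FDia p | FBox p | FNot p => (fsize p).+1
  | FAnd p q => (fsize p + fsize q).+1
  | FCmp ts _ k =>
      (fix sizet (ts : seq (int * term Sigma)) : nat :=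
         match ts with
         | [::] => 0
         | (a, t) :: ts' => int_size a + tsize t + 1 + sizet ts'
         end) ts + 1 + int_size k
  | FRef _ => 1
  end
with tsize (Sigma : Type) (t : term Sigma) {struct t} : nat :=
  match t with
  | TCount p => (fsize p).+1
  | TConst c => int_size c
  end.

(* the program defines the language of its last line.                 *)

Definition program (Sigma : Type) := seq (form Sigma).

Definition dflt_form (Sigma : Type) : form Sigma := FCmp [::] CLe 0%R.

Definition wf_prog (Sigma : Type) (ps : program Sigma) : bool :=
  (0 < size ps) &&
  all (fun k => refs_ok k (nth (dflt_form Sigma) ps k)) (iota 0 (size ps)).

Definition prog_size (Sigma : Type) (ps : program Sigma) : nat :=
  sumn (map (@fsize Sigma) ps).

Fixpoint penv (Sigma : eqType) (ps : program Sigma) (w : seq Sigma) (n : nat)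
    : nat -> nat -> bool :=
  match n with
  | 0 => fun _ _ => false
  | n'.+1 =>
      let e := penv ps w n' in
      fun j p => if j == n' then eval e w (nth (dflt_form Sigma) ps n') p
                 else e j p
  end.

Definition accepts (Sigma : eqType) (ps : program Sigma) (w : seq Sigma) : bool :=
  eval (penv ps w (size ps).-1) w (nth (dflt_form Sigma) ps (size ps).-1) (size w).

(* g bounds the length complexity f, i.e. f(c) <= g(c) for all c:
   whenever two programs of size <= c satisfy L(E) \ L(E') <> empty,
   some string of length <= g c lies in L(E) \ L(E'). *)
Definition length_complexity_bounded_by (Sigma : eqType) (g : nat -> nat) : Prop :=
  forall (c : nat) (E E' : program Sigma),
    wf_prog E -> wf_prog E' -> prog_size E <= c -> prog_size E' <= c ->
    (exists w : seq Sigma, accepts E w && ~~ accepts E' w) ->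
    exists w : seq Sigma, size w <= g c /\ accepts E w && ~~ accepts E' w.

Inductive prf :=
| PZero
| PSucc
| PProj of nat
| PComp of prf & seq prf
| PRec of prf & prf
| PMin of prf.

Inductive prf_eval : prf -> seq nat -> nat -> Prop :=
| ev_zero args : prf_eval PZero args 0
| ev_succ x args : prf_eval PSucc (x :: args) x.+1
| ev_proj i args : i < size args -> prf_eval (PProj i) args (nth 0 args i)
| ev_comp f gs args ys y :
    prf_evals gs args ys -> prf_eval f ys y -> prf_eval (PComp f gs) args y
| ev_rec0 f g args y : prf_eval f args y -> prf_eval (PRec f g) (0 :: args) y
| ev_recS f g n args r y :
    prf_eval (PRec f g) (n :: args) r -> prf_eval g (n :: r :: args) y ->
    prf_eval (PRec f g) (n.+1 :: args) y
| ev_min f args n :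
    prf_eval f (n :: args) 0 ->
    (forall m, m < n -> exists v, prf_eval f (m :: args) v.+1) ->
    prf_eval (PMin f) args n
with prf_evals : seq prf -> seq nat -> seq nat -> Prop :=
| evs_nil args : prf_evals [::] args [::]
| evs_cons g gs args y ys :
    prf_eval g args y -> prf_evals gs args ys -> prf_evals (g :: gs) args (y :: ys).

Definition computable (g : nat -> nat) : Prop :=
  exists p : prf, forall n, prf_eval p [:: n] (g n).

(* Main.v *)
Require Import Defs.
From HB Require Import structures.
From mathcomp Require Import all_boot all_order all_algebra.
From mathcomp Require Import zify.
From Stdlib Require Import FunctionalExtensionality.
Set Implicit Arguments. Unset Strict Implicit. Unset Printing Implicit Defensive.

Definition upd (s : nat -> nat) (x v : nat) : nat -> nat :=
  fun y => if y == x then v else s y.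

Lemma updE s x v y : upd s x v y = if y == x then v else s y.
Proof. by []. Qed.

Lemma upd_same s x v : upd s x v x = v.
Proof. by rewrite /upd eqxx. Qed.

Lemma upd_other s x v y : y != x -> upd s x v y = s y.
Proof. by rewrite /upd => /negbTE ->. Qed.

Lemma upd_upd s x a b : upd (upd s x a) x b = upd s x b.
Proof. apply: functional_extensionality => y; rewrite /upd; by case: (y == x). Qed.

Lemma upd_id s x : upd s x (s x) = s.
Proof. apply: functional_extensionality => y; rewrite /upd; by case: eqP => [->|]. Qed.

Lemma upd_comm s x y a b : x != y -> upd (upd s x a) y b = upd (upd s y b) x a.
Proof.
move=> nxy; apply: functional_extensionality => z; rewrite /upd.
case: (eqVneq z y) => [->|]; last by [].
by rewrite eq_sym (negbTE nxy).
Qed.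

Inductive ins := MInc of nat | MDec of nat & nat | MJmp of nat.

Definition config := (nat * (nat -> nat))%type.

Definition stepf (M : seq ins) (c : config) : option config :=
  let: (pc, s) := c in
  if pc < size M then
    match nth (MJmp 0) M pc with
    | MInc r => Some (pc.+1, upd s r (s r).+1)
    | MDec r t => if s r == 0 then Some (minn t (size M), s)
                  else Some (pc.+1, upd s r (s r).-1)
    | MJmp t => Some (minn t (size M), s)
    end
  else None.

Inductive star (M : seq ins) : config -> config -> Prop :=
| star_refl c : star M c c
| star_step c c1 c2 : stepf M c = Some c1 -> star M c1 c2 -> star M c c2.

Lemma star_trans M c1 c2 c3 : star M c1 c2 -> star M c2 c3 -> star M c1 c3.
Proof. elim=> // c c' c'' H _ IH H2; apply: star_step H (IH H2). Qed.

Lemma star_det M c c1 c2 : star M c c1 -> star M c c2 ->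
  stepf M c1 = None -> stepf M c2 = None -> c1 = c2.
Proof.
move=> H; elim: H c2 => [c0|c0 c0' c0'' Hs _ IH] c2 H2 Hn1 Hn2.
- inversion H2; subst => //. by rewrite Hn1 in H.
- inversion H2; subst; first by rewrite Hn2 in Hs.
  rewrite Hs in H; case: H => E; subst; exact: IH.
Qed.

Inductive cmd := CInc of nat | CLoop of nat & cmd | CSeq of cmd & cmd | CSkip.

Inductive exec : cmd -> (nat -> nat) -> (nat -> nat) -> Prop :=
| eInc x s : exec (CInc x) s (upd s x (s x).+1)
| eSkip s : exec CSkip s s
| eSeq c1 c2 s s1 s2 : exec c1 s s1 -> exec c2 s1 s2 -> exec (CSeq c1 c2) s s2
| eLoop0 x c s : s x = 0 -> exec (CLoop x c) s s
| eLoopS x c s s1 s2 : 0 < s x -> exec c (upd s x (s x).-1) s1 ->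
    exec (CLoop x c) s1 s2 -> exec (CLoop x c) s s2.

Fixpoint clen (c : cmd) : nat :=
  match c with
  | CInc _ => 1
  | CSkip => 0
  | CSeq c1 c2 => clen c1 + clen c2
  | CLoop _ b => (clen b).+2
  end.

Fixpoint comp (o : nat) (c : cmd) : seq ins :=
  match c with
  | CInc x => [:: MInc x]
  | CSkip => [::]
  | CSeq c1 c2 => comp o c1 ++ comp (o + clen c1) c2
  | CLoop x b => MDec x (o + (clen b).+2) :: comp o.+1 b ++ [:: MJmp o]
  end.

Lemma size_comp o c : size (comp o c) = clen c.
Proof.
elim: c o => //= [x b IH|c1 IH1 c2 IH2] o.
- by rewrite size_cat IH /= addn1.
- by rewrite size_cat IH1 IH2.
Qed.

Definition code_at (M : seq ins) (o : nat) (code : seq ins) :=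
  o + size code <= size M /\
  forall i, i < size code -> nth (MJmp 0) M (o + i) = nth (MJmp 0) code i.

Lemma exec_star c s s' : exec c s s' -> forall M o, code_at M o (comp o c) ->
  star M (o, s) (o + clen c, s').
Proof.
elim=> {c s s'}.
- move=> x s M o [Hle Hat].
  apply: star_step (star_refl _ _).
  rewrite /stepf; move: Hle; rewrite /= => Hle.
  have -> : o < size M by lia.
  by have := Hat 0 isT; rewrite addn0 /= => ->; rewrite addn1.
- by move=> s M o _; rewrite addn0; exact: star_refl.
- move=> c1 c2 s s1 s2 _ IH1 _ IH2 M o [Hle Hat].
  move: Hle Hat; rewrite /= size_cat !size_comp => Hle Hat.
  apply: star_trans (IH1 M o _) _.
    split; first by rewrite size_comp; lia.
    move=> i; rewrite size_comp => Hi; rewrite Hat; last by lia.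
    by rewrite nth_cat size_comp Hi.
  rewrite addnA; apply: IH2; split; first by rewrite size_comp; lia.
  move=> i; rewrite size_comp => Hi; rewrite -addnA Hat; last by lia.
  by rewrite nth_cat size_comp ltnNge leq_addr /= addKn.
- move=> x b s Hx M o [Hle Hat].
  apply: star_step (star_refl _ _).
  move: Hle Hat; rewrite /= size_cat size_comp /= => Hle Hat.
  rewrite /stepf; have -> : o < size M by lia.
  have := Hat 0 isT; rewrite addn0 /= => ->.
  rewrite Hx eqxx; congr (Some (_, _)).
  apply/minn_idPl; lia.
- move=> x b s s1 s2 Hx _ IHb _ IHl M o [Hle Hat].
  move: (Hle) (Hat); rewrite /= size_cat size_comp /= => Hle' Hat'.
  apply: star_step.
    rewrite /stepf; have -> : o < size M by lia.
    have := Hat' 0 isT; rewrite addn0 /= => ->.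
    by rewrite (negbTE (lt0n_neq0 Hx)).
  apply: star_trans (IHb M o.+1 _) _.
    split; first by rewrite size_comp; lia.
    move=> i; rewrite size_comp => Hi.
    have -> : o.+1 + i = o + i.+1 by lia.
    rewrite Hat'; last by lia.
    by rewrite /= nth_cat size_comp Hi.
  apply: star_step.
    rewrite /stepf; have -> : o.+1 + clen b < size M by lia.
    have := Hat' (clen b).+1 ltac:(lia).
    rewrite addnS -addSn => ->; rewrite /= nth_cat size_comp ltnn subnn /=.
    have -> : minn o (size M) = o by apply/minn_idPl; lia.
    reflexivity.
  exact: IHl.
Qed.

Definition clear x := CLoop x CSkip.
Definition addto x y := CLoop x (CInc y).
Definition move x y := CSeq (clear y) (addto x y).
Definition copy x y t :=
  CSeq (clear y) (CSeq (clear t) (CSeq (CLoop x (CSeq (CInc y) (CInc t))) (addto t x))).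

Lemma exec_clear x s : exec (clear x) s (upd s x 0).
Proof.
move Hn: (s x) => n; elim: n s Hn => [|n IH] s Hn.
- by rewrite -Hn upd_id; apply: eLoop0.
- apply: eLoopS; [by rewrite Hn| exact: eSkip |].
  rewrite -[upd s x 0](upd_upd s x (s x).-1); apply: IH.
  by rewrite upd_same Hn.
Qed.

Ltac solve_upd := let z := fresh "z" in
  apply: functional_extensionality => z; rewrite ?updE;
  repeat (case: eqP => /= ?; subst); try lia.

Lemma exec_addto x y s : x <> y ->
  exec (addto x y) s (upd (upd s y (s y + s x)) x 0).
Proof.
move=> nxy; move Hn: (s x) => n; elim: n s Hn => [|n IH] s Hn.
- rewrite addn0 upd_id -Hn upd_id; by apply: eLoop0.
- apply: eLoopS; [by rewrite Hn| exact: eInc |].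
  set s1 := upd _ _ _.
  have -> : upd (upd s y (s y + n.+1)) x 0 = upd (upd s1 y (s1 y + s1 x)) x 0.
    rewrite /s1; solve_upd.
  have E : s1 x = n by rewrite /s1 !updE; repeat (case: eqP => /= ?; subst); lia.
  by rewrite E; apply: IH.
Qed.

Lemma exec_move x y s : x <> y ->
  exec (move x y) s (upd (upd s y (s x)) x 0).
Proof.
move=> nxy; apply: eSeq (exec_clear _ _) _.
have := exec_addto (upd s y 0) nxy.
have -> : upd (upd (upd s y 0) y (upd s y 0 y + upd s y 0 x)) x 0 = upd (upd s y (s x)) x 0.
  solve_upd.
done.
Qed.

Lemma exec_copy x y t s : x <> y -> x <> t -> y <> t ->
  exec (copy x y t) s (upd (upd s y (s x)) t 0).
Proof.
move=> nxy nxt nyt.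
apply: eSeq (exec_clear _ _) _; apply: eSeq (exec_clear _ _) _.
set s0 := upd (upd s y 0) t 0.
have H : forall n s1, s1 x = n ->
  exec (CLoop x (CSeq (CInc y) (CInc t))) s1
       (upd (upd (upd s1 y (s1 y + n)) t (s1 t + n)) x 0).
  elim=> [|n IH] s1 Hn.
  - rewrite !addn0 !upd_id -Hn upd_id; by apply: eLoop0.
  - apply: eLoopS; [by rewrite Hn| apply: eSeq; [exact: eInc| exact: eInc] |].
    set s2 := upd _ _ _.
    have -> : upd (upd (upd s1 y (s1 y + n.+1)) t (s1 t + n.+1)) x 0 =
              upd (upd (upd s2 y (s2 y + n)) t (s2 t + n)) x 0.
      rewrite /s2; solve_upd.
    apply: IH; rewrite /s2 !updE; repeat (case: eqP => /= ?; subst); lia.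
apply: eSeq (H _ s0 erefl) _.
set s3 := upd _ _ _.
have nxt' : t <> x by auto.
have := exec_addto s3 nxt'.
have -> : upd (upd s3 x (s3 x + s3 t)) t 0 = upd (upd s y (s x)) t 0; last by [].
rewrite /s3 /s0; solve_upd.
Qed.

Definition prf_ind' (P : prf -> Prop) (H0 : P PZero) (H1 : P PSucc)
  (H2 : forall i, P (PProj i))
  (H3 : forall f gs, P f -> List.Forall P gs -> P (PComp f gs))
  (H4 : forall f g, P f -> P g -> P (PRec f g))
  (H5 : forall f, P f -> P (PMin f)) : forall p, P p :=
  fix F p := match p return P p with
  | PZero => H0 | PSucc => H1 | PProj i => H2 i
  | PComp f gs => H3 f gs (F f)
      ((fix G gs := match gs return List.Forall P gs with
        | [::] => List.Forall_nil P
        | g :: gs' => List.Forall_cons g (F g) (G gs') end) gs)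
  | PRec f g => H4 f g (F f) (F g)
  | PMin f => H5 f (F f)
  end.

Fixpoint comp_gs (cp : prf -> seq nat -> nat -> nat -> cmd) (gs : seq prf)
   (ins : seq nat) (o B : nat) : cmd :=
  match gs with
  | [::] => CSkip
  | g :: gs' => CSeq (cp g ins o B) (comp_gs cp gs' ins o.+1 B)
  end.

Fixpoint comp_prf (p : prf) (ins : seq nat) (out b : nat) : cmd :=
  match p with
  | PZero => clear out
  | PSucc => match ins with
             | i0 :: _ => CSeq (copy i0 b b.+1) (CSeq (move b out) (CInc out))
             | [::] => CSkip end
  | PProj i => CSeq (copy (nth 0 ins i) b b.+1) (move b out)
  | PComp f gs =>
      let m := size gs in
      CSeq (comp_gs comp_prf gs ins b (b + m))
           (CSeq (comp_prf f (iota b m) (b + m) (b + m).+1) (move (b + m) out))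
  | PRec f g =>
      match ins with
      | i0 :: ins' =>
        CSeq (copy i0 b (b+3)) (CSeq (clear (b+1)) (CSeq (comp_prf f ins' (b+2) (b+4))
        (CSeq (CLoop b (CSeq (comp_prf g ((b+1) :: (b+2) :: ins') (b+3) (b+4))
                        (CSeq (move (b+3) (b+2)) (CInc (b+1)))))
              (move (b+2) out))))
      | [::] => CSkip end
  | PMin f =>
      CSeq (clear b) (CSeq (comp_prf f (b :: ins) b.+1 b.+2)
      (CSeq (CLoop b.+1 (CSeq (clear b.+1) (CSeq (CInc b) (comp_prf f (b :: ins) b.+1 b.+2))))
            (move b out)))
  end.

Definition spec (p : prf) := forall args y, prf_eval p args y ->
  forall ins out b s, map s ins = args -> all (fun r => r < b) ins -> out < b ->
  exists s', exec (comp_prf p ins out b) s s' /\ s' out = y /\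
    (forall r, r < b -> r <> out -> s' r = s r).

Inductive iter (x : nat) (body : cmd) : nat -> (nat -> nat) -> (nat -> nat) -> Prop :=
| it0 s : iter x body 0 s s
| itS k s s1 s2 : iter x body k s s1 -> 0 < s1 x ->
    exec body (upd s1 x (s1 x).-1) s2 -> iter x body k.+1 s s2.

Lemma iter_loop x body k s s1 s2 : iter x body k s s1 ->
  exec (CLoop x body) s1 s2 -> exec (CLoop x body) s s2.
Proof.
elim=> // k' s0 s3 s4 _ IH H3 H4 H5; apply: IH; exact: eLoopS H3 H4 H5.
Qed.

Lemma map_upd_notin (s : nat -> nat) ins x v : all (fun r => r < x) ins ->
  map (upd s x v) ins = map s ins.
Proof.
elim: ins => //= a l IH /andP [Ha Hl]; rewrite IH // updE.
by have -> : (a == x) = false by apply/eqP; lia.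
Qed.

Lemma map_pres (s s' : nat -> nat) ins b : all (fun r => r < b) ins ->
  (forall r, r < b -> s' r = s r) -> map s' ins = map s ins.
Proof.
move=> Ha H; elim: ins Ha => //= a l IH /andP [Ha Hl]; by rewrite IH // H.
Qed.

Lemma all_lt_mono ins b b' : all (fun r => r < b) ins -> b <= b' ->
  all (fun r => r < b') ins.
Proof. move=> H Hb; apply/allP => r Hr; have := allP H r Hr; lia. Qed.

Lemma rec_chain f g n args y : prf_eval (PRec f g) (n :: args) y ->
  exists rs : seq nat, [/\ size rs = n.+1, prf_eval f args (nth 0 rs 0),
    (forall k, k < n -> prf_eval g (k :: nth 0 rs k :: args) (nth 0 rs k.+1)) &
    nth 0 rs n = y].
Proof.
elim: n y => [|n IH] y H.
- inversion H; subst. exists [:: y]; split => //.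
- inversion H; subst. have [rs [Hs Hf Hg Hl]] := IH _ H5.
  exists (rcons rs y); split.
  + by rewrite size_rcons Hs.
  + by rewrite nth_rcons Hs.
  + move=> k Hk; rewrite !nth_rcons Hs.
    case: (ltnP k n) => Hkn.
    * have -> : k < n.+1 by lia. have -> : k.+1 < n.+1 by lia. exact: Hg.
    * have Ek : k = n by lia. subst k. rewrite ltnSn ltnn eqxx Hl. done.
  + by rewrite nth_rcons Hs ltnn eqxx.
Qed.

Ltac updc := rewrite ?updE; repeat (let E := fresh "E" in case: eqP => /= E; try rewrite E); try lia.

Lemma spec_zero : spec PZero.
Proof.
move=> args y H ins out b s _ _ Hout; inversion H; subst.
exists (upd s out 0); split; first exact: exec_clear.
split; first by rewrite upd_same.
move=> r Hr Hro; updc.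
Qed.

Lemma spec_succ : spec PSucc.
Proof.
move=> args y H; inversion H; subst => ins out b s Hm Hins Hout.
case: ins Hm Hins => //= i0 ins [Hi0 _] /andP [Hib _].
eexists; split.
  apply: eSeq; first (apply: exec_copy; lia).
  apply: eSeq; first (apply: exec_move; lia).
  exact: eInc.
split; first by updc.
move=> r Hr Hro; updc.
Qed.

Lemma spec_proj i : spec (PProj i).
Proof.
move=> args y H; inversion H; subst => ins out b s Hm Hins Hout.
subst args; move: H1; rewrite size_map => Hi.
have Hib : nth 0 ins i < b by apply: (allP Hins); exact: mem_nth.
eexists; split.
  apply: eSeq; first (apply: exec_copy; lia).
  apply: exec_move; lia.
split; first by rewrite (nth_map 0) //; updc.
move=> r Hr Hro; updc.
Qed.

Lemma gs_spec gs : List.Forall spec gs -> forall args ys, prf_evals gs args ys ->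
  forall ins o B s, map s ins = args -> all (fun r => r < o) ins -> o + size gs <= B ->
  exists s', exec (comp_gs comp_prf gs ins o B) s s' /\
    map s' (iota o (size gs)) = ys /\
    (forall r, r < B -> (r < o \/ o + size gs <= r) -> s' r = s r).
Proof.
elim=> [|g gs1 Hg Hgs IH] args ys H ins o B s Hm Hins HB.
- inversion H; subst. exists s; split; first exact: eSkip. by split.
- inversion H; subst. move: HB => /= HB.
  have [s1 [E1 [O1 P1]]] := Hg _ _ H2 ins o B s erefl
     (@all_lt_mono _ _ B Hins ltac:(lia)) ltac:(lia).
  have Hm1 : map s1 ins = map s ins.
    apply: (map_pres Hins) => r Hr; apply: P1; lia.
  have [s2 [E2 [O2 P2]]] := IH _ _ H5 ins o.+1 B s1 Hm1
     (@all_lt_mono _ _ o.+1 Hins ltac:(lia)) ltac:(lia).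
  exists s2; split; first exact: eSeq E1 E2.
  split.
  + by rewrite /= O2 P2 ?O1 //; lia.
  + move=> r Hr Hro; rewrite P2; [apply: P1|..]; lia.
Qed.

Lemma spec_comp f gs : spec f -> List.Forall spec gs -> spec (PComp f gs).
Proof.
move=> Hf Hgs args y H; inversion H; subst => ins out b s Hm Hins Hout.
have [s1 [E1 [O1 P1]]] := gs_spec Hgs H2 Hm Hins (leqnn (b + size gs)).
have Hall : all (fun r => r < (b + size gs).+1) (iota b (size gs)).
  apply/allP => r; rewrite mem_iota; lia.
have [s2 [E2 [O2 P2]]] := Hf _ _ H5 (iota b (size gs)) (b + size gs) (b + size gs).+1 s1
   O1 Hall (ltnSn _).
eexists; split.
  apply: eSeq E1 _; apply: eSeq E2 _; apply: exec_move; lia.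
split; first by updc.
move=> r Hr Hro; updc. rewrite P2; [apply: P1|..]; lia.
Qed.

Lemma spec_rec f g : spec f -> spec g -> spec (PRec f g).
Proof.
move=> Hf Hg args y H ins out b s Hm Hins Hout.
case: ins Hm Hins => [|i0 ins'] Hm Hins.
  by subst args; inversion H.
subst args; move: Hins => /= /andP [Hi0 Hins'].
have [rs [Hsz Hf0 Hgk Hlast]] := rec_chain H.
set n := s i0 in Hsz Hf0 Hgk Hlast.
set s1 := upd (upd s b (s i0)) (b+3) 0.
set s2 := upd s1 (b+1) 0.
have Hm2 : map s2 ins' = map s ins'.
  apply: (map_pres Hins') => r Hr; rewrite /s2 /s1; updc.
have [s3 [E3 [O3 P3]]] := Hf _ _ Hf0 ins' (b+2) (b+4) s2 Hm2
   (@all_lt_mono _ _ (b+4) Hins' ltac:(lia)) ltac:(lia).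
set body := CSeq (comp_prf g ((b+1) :: (b+2) :: ins') (b+3) (b+4))
                 (CSeq (move (b+3) (b+2)) (CInc (b+1))).
have Inv : forall k, k <= n -> exists sk, [/\ iter b body k s3 sk, sk b = n - k,
     sk (b+1) = k, sk (b+2) = nth 0 rs k & forall r, r < b -> sk r = s3 r].
  elim=> [|k IH] Hk.
  - exists s3; split => //; first exact: it0.
    + rewrite P3; [|lia|lia]. rewrite /s2 /s1; updc.
    + rewrite P3; [|lia|lia]. rewrite /s2 /s1; updc.
  - have [sk [Ik Bk Ck Rk Pk]] := IH ltac:(lia).
    set t := upd sk b (sk b).-1.
    have Hmt : map t [:: b+1, b+2 & ins'] = [:: k, nth 0 rs k & map s ins'].
      rewrite /= /t !updE.
      have -> : (b + 1 == b) = false by apply/eqP; lia.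
      have -> : (b + 2 == b) = false by apply/eqP; lia.
      rewrite Ck Rk -Hm2; congr [:: _, _ & _].
      apply: (map_pres Hins') => r Hr; rewrite updE.
      have -> : (r == b) = false by apply/eqP; lia.
      rewrite Pk // P3; [done|lia|lia].
    have Hallt : all (fun r => r < b + 4) [:: b+1, b+2 & ins'].
      rewrite /= (@all_lt_mono _ _ (b+4) Hins' ltac:(lia)); lia.
    have [t1 [E4 [O4 P4]]] := Hg _ _ (Hgk k ltac:(lia)) _ (b+3) (b+4) t Hmt Hallt ltac:(lia).
    eexists; split.
    + apply: itS Ik _ _; first by lia.
      apply: eSeq E4 _; apply: eSeq; first (apply: exec_move; lia).
      exact: eInc.
    + updc. rewrite P4; [|lia|lia]. rewrite /t; updc.
    + updc. rewrite P4; [|lia|lia]. rewrite /t; updc.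
    + updc.
    + move=> r Hr; rewrite -Pk //; updc; rewrite P4; [|lia|lia]; rewrite /t; updc.
have [sn [In Bn Cn Rn Pn]] := Inv n (leqnn _).
have Eloop : exec (CLoop b body) s3 sn.
  apply: iter_loop In _; apply: eLoop0; lia.
eexists; split.
  apply: eSeq; first (apply: exec_copy; lia).
  apply: eSeq; first exact: exec_clear.
  apply: eSeq E3 _; apply: eSeq Eloop _.
  apply: exec_move; lia.
split; first by updc.
move=> r Hr Hro; updc. rewrite Pn // P3; [|lia|lia]. rewrite /s2 /s1; updc.
Qed.

Lemma spec_min f : spec f -> spec (PMin f).
Proof.
move=> Hf args n H; inversion H; subst => ins out b s Hm Hins Hout.
have Hv : forall m, m <= n -> exists v, prf_eval f (m :: args) v /\ (v == 0) = (m == n).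
  move=> m Hm'; case: (ltnP m n) => Hmn.
  - have [v Hv] := H2 m Hmn; exists v.+1; split => //.
    by have -> : (m == n) = false by apply/eqP; lia.
  - have -> : m = n by lia. by exists 0; rewrite !eqxx.
set s1 := upd s b 0.
have Hall : all (fun r => r < b.+2) (b :: ins).
  by rewrite /= (@all_lt_mono _ _ b.+2 Hins ltac:(lia)) andbT.
have Hm1 : map s1 (b :: ins) = 0 :: args.
  rewrite /= /s1 upd_same -Hm; congr (_ :: _).
  apply: (map_pres Hins) => r Hr; updc.
have [v0 [Hv0 Z0]] := Hv 0 (leq0n _).
have [s2 [E2 [O2 P2]]] := Hf _ _ Hv0 (b :: ins) b.+1 b.+2 s1 Hm1 Hall (ltnSn _).
set body := CSeq (clear b.+1) (CSeq (CInc b) (comp_prf f (b :: ins) b.+1 b.+2)).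
have Inv : forall m, m <= n -> exists sm, [/\ iter b.+1 body m s2 sm, sm b = m,
     (sm b.+1 == 0) = (m == n) & forall r, r < b -> sm r = s2 r].
  elim=> [|m IH] Hmn.
  - exists s2; split => //; first exact: it0.
    + rewrite P2; [|lia|lia]. by rewrite /s1 upd_same.
    + by rewrite O2.
  - have [sm [Im Bm Zm Pm]] := IH ltac:(lia).
    have Hpos : 0 < sm b.+1.
      rewrite lt0n Zm; apply/eqP; lia.
    set t := upd (upd (upd sm b.+1 (sm b.+1).-1) b.+1 0) b (upd (upd sm b.+1 (sm b.+1).-1) b.+1 0 b).+1.
    have [v [Hvm Zv]] := Hv m.+1 Hmn.
    have Hmt : map t (b :: ins) = m.+1 :: args.
      rewrite /= /t !updE eqxx.
      have -> : (b == b.+1) = false by apply/eqP; lia.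
      rewrite Bm -Hm; congr (_ :: _).
      apply: (map_pres Hins) => r Hr; updc. rewrite Pm // P2; [|lia|lia]; rewrite /s1; updc.
    have [t1 [E4 [O4 P4]]] := Hf _ _ Hvm _ b.+1 b.+2 t Hmt Hall (ltnSn _).
    exists t1; split.
    + apply: itS Im Hpos _.
      apply: eSeq; first exact: exec_clear.
      apply: eSeq; first exact: eInc.
      exact: E4.
    + rewrite P4; [|lia|lia]. rewrite /t; updc.
    + by rewrite O4.
    + move=> r Hr; rewrite -Pm //; rewrite P4; [|lia|lia]; rewrite /t; updc.
have [sn [In Bn Zn Pn]] := Inv n (leqnn _).
have Eloop : exec (CLoop b.+1 body) s2 sn.
  apply: iter_loop In _; apply: eLoop0; apply/eqP; by rewrite Zn.
eexists; split.
  apply: eSeq; first exact: exec_clear.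
  apply: eSeq E2 _; apply: eSeq Eloop _.
  apply: exec_move; lia.
split; first by updc.
move=> r Hr Hro; updc. rewrite Pn // P2; [|lia|lia]. rewrite /s1; updc.
Qed.

Theorem comp_prf_spec p : spec p.
Proof.
elim/prf_ind': p.
- exact: spec_zero.
- exact: spec_succ.
- exact: spec_proj.
- by move=> f gs Hf Hgs; apply: spec_comp.
- by move=> f g Hf Hg; apply: spec_rec.
- by move=> f Hf; apply: spec_min.
Qed.

Import Order.TTheory GRing.Theory Num.Theory.
Definition Sig := 'I_6.
Local Open Scope ring_scope.

Fixpoint sumT (Sigma : eqType) env (w : seq Sigma) (ts : seq (int * term Sigma)) i : int :=
  match ts with [::] => 0 | (a, t) :: ts' => a * eval_term env w t i + sumT env w ts' i end.
Lemma eval_cmp (Sigma : eqType) env (w : seq Sigma) ts o k i :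
  eval env w (FCmp ts o k) i = cmpb o (sumT env w ts i) k.
Proof. rewrite /=; congr cmpb; elim: ts => //= [[a t] ts ->]. done. Qed.
Fixpoint sizeT (Sigma : Type) (ts : seq (int * term Sigma)) : nat :=
  match ts with [::] => 0%N | (a, t) :: ts' => (int_size a + Defs.tsize t + 1 + sizeT ts')%N end.
Lemma size_cmp (Sigma : Type) (ts : seq (int * term Sigma)) o k :
  fsize (FCmp ts o k) = (sizeT ts + 1 + int_size k)%N.
Proof. rewrite /=; congr (_ + _ + _)%N; elim: ts => //= [[a t] ts ->]. done. Qed.
Fixpoint refsT (Sigma : Type) n (ts : seq (int * term Sigma)) : bool :=
  match ts with [::] => true | (a, t) :: ts' => refs_ok_term n t && refsT n ts' end.
Lemma refs_cmp (Sigma : Type) n (ts : seq (int * term Sigma)) o k :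
  refs_ok n (FCmp ts o k) = refsT n ts.
Proof. rewrite /=; elim: ts => //= [[a t] ts ->]. done. Qed.

Definition sU : 'I_6 := @Ordinal 6 0 isT.
Definition sD : 'I_6 := @Ordinal 6 1 isT.
Definition sI : 'I_6 := @Ordinal 6 2 isT.
Definition sDe : 'I_6 := @Ordinal 6 3 isT.
Definition sZ : 'I_6 := @Ordinal 6 4 isT.
Definition sJ : 'I_6 := @Ordinal 6 5 isT.
Definition instrs := [:: sI; sDe; sZ; sJ].

Inductive eff := EInc of nat | EDec of nat | EZero of nat | ENone.
Record ev := Ev { eq_ : nat; esym : 'I_6; etgt : nat; eeff : eff }.
Definition eff2 (x : eff) : nat * nat :=
  match x with EInc r => (0%N, r) | EDec r => (1%N, r) | EZero r => (2%N, r) | ENone => (3%N, 0%N) end.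
Definition ffe (p : nat * nat) : eff :=
  match p with (0, r) => EInc r | (1, r) => EDec r | (2, r) => EZero r | _ => ENone end%N.
Lemma eff2K : cancel eff2 ffe. Proof. by case. Qed.
HB.instance Definition _ := Equality.copy eff (can_type eff2K).
Definition ev2 (e : ev) : nat * 'I_6 * nat * eff := (eq_ e, esym e, etgt e, eeff e).
Definition fev2 (p : nat * 'I_6 * nat * eff) : ev := let: (a, b, c, d) := p in Ev a b c d.
Lemma ev2K : cancel ev2 fev2. Proof. by case. Qed.
HB.instance Definition _ := Equality.copy ev (can_type ev2K).

Definition lst (L q : nat) (i : ins) : seq ev :=
  match i with
  | MInc r => [:: Ev q sI q.+1 (EInc r)]
  | MDec r t => [:: Ev q sDe q.+1 (EDec r); Ev q sZ (minn t L) (EZero r)]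
  | MJmp t => [:: Ev q sJ (minn t L) ENone]
  end.
Definition events (M : seq ins) : seq ev :=
  flatten [seq lst (size M) q (nth (MJmp 0) M q) | q <- iota 0 (size M)].
Definition regs_of (i : ins) : seq nat :=
  match i with MInc r => [:: r] | MDec r _ => [:: r] | MJmp _ => [::] end.
Definition regsM (M : seq ins) : seq nat := flatten [seq regs_of i | i <- M].

Definition isS (w : seq Sig) (s : Sig) (j : nat) : bool :=
  (0 < j)%N && (nth None (map Some w) j.-1 == Some s).
Definition Sv w j : int := (count (isS w sU) (iota 1 j))%:Z - (count (isS w sD) (iota 1 j))%:Z.
Definition evh w e j := isS w (esym e) j && (Sv w j == (eq_ e)%:Z).
Definition cnt w e j : nat := count (evh w e) (iota 1 j).
Definition lin w (cf : ev -> int) (E : seq ev) j : int := \sum_(e <- E) cf e * (cnt w e j)%:Z.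
Definition effc r e : int :=
  match eeff e with EInc r' => (r' == r)%:Z | EDec r' => - (r' == r)%:Z | _ => 0 end.
Definition balc q e : int := (etgt e == q)%:Z - (eq_ e == q)%:Z.
Definition init (c r : nat) : int := if r == 0%N then c%:Z else 0.
Definition counter M c w r j := init c r + lin w (effc r) (events M) j.
Definition bal M w q j := (q == 0%N)%:Z + lin w (balc q) (events M) j.
Definition guard M c w e j :=
  match eeff e with EZero r => counter M c w r j == 0 | _ => true end.
Definition V M c w j :=
  [&& (~~ has (fun s => isS w s j) instrs) || has (fun e => evh w e j && guard M c w e j) (events M),
      all (fun r => 0 <= counter M c w r j) (regsM M) &
      all (fun q => 0 <= bal M w q j) (iota 0 (size M))].
Definition acc M c w := all (V M c w) (iota 1 (size w)) && (1 <= bal M w (size M) (size w)).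

Definition fFalse : Defs.form Sig := FCmp [::] CLt 0.
Definition fTrue : Defs.form Sig := FNot fFalse.
Definition fOr (a b : Defs.form Sig) := FNot (FAnd (FNot a) (FNot b)).
Definition bigor (l : seq (Defs.form Sig)) := foldr fOr fFalse l.
Definition bigand (l : seq (Defs.form Sig)) := foldr FAnd fTrue l.
Definition fev e : Defs.form Sig :=
  FAnd (FSym (esym e)) (FCmp [:: (1, TCount (FSym sU)); (-1, TCount (FSym sD))] CEq (eq_ e)%:Z).
Definition fLin cf E o k : Defs.form Sig := FCmp [seq (cf e, TCount (fev e)) | e <- E] o k.
Definition fCntGe M c r := fLin (effc r) (events M) CGe (- init c r).
Definition fCntEq M c r := fLin (effc r) (events M) CEq (- init c r).
Definition fBal M q := fLin (balc q) (events M) CGe (- (q == 0%N)%:Z).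
Definition fGuard M c e := match eeff e with EZero r => fCntEq M c r | _ => fTrue end.
Definition fV M c :=
  FAnd (FAnd (fOr (FNot (bigor [seq FSym s | s <- instrs]))
                  (bigor [seq FAnd (fev e) (fGuard M c e) | e <- events M]))
             (bigand [seq fCntGe M c r | r <- regsM M]))
       (bigand [seq fBal M q | q <- iota 0 (size M)]).
Definition phi M c := FAnd (FBox (fV M c))
  (fLin (balc (size M)) (events M) CGe (1 - (size M == 0%N)%:Z)).

Section EvalLemmas.
Lemma eval_bigor env (w : seq Sig) l j : eval env w (bigor l) j = has (fun f => eval env w f j) l.
Proof. elim: l => //= f l <-; by rewrite /fOr /= negb_and !negbK. Qed.
Lemma eval_bigand env (w : seq Sig) l j : eval env w (bigand l) j = all (fun f => eval env w f j) l.
Proof. by elim: l => //= f l <-. Qed.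
Lemma eval_fev env (w : seq Sig) e j : eval env w (fev e) j = evh w e j.
Proof. by rewrite /fev /= mul1r mulN1r addr0. Qed.
Lemma eval_fLin env (w : seq Sig) cf E o k j : eval env w (fLin cf E o k) j = cmpb o (lin w cf E j) k.
Proof.
rewrite /fLin eval_cmp /lin; congr cmpb.
elim: E => [|e E IH] /=; first by rewrite big_nil.
rewrite big_cons IH; congr (_ * _ + _); congr (_%:Z).
exact: (eq_count (fun i => eval_fev env w e i)).
Qed.
Lemma eval_and (Sigma : eqType) env (w : seq Sigma) a b j : eval env w (FAnd a b) j = eval env w a j && eval env w b j.
Proof. by []. Qed.
Lemma eval_not (Sigma : eqType) env (w : seq Sigma) a j : eval env w (FNot a) j = ~~ eval env w a j.
Proof. by []. Qed.
Lemma eval_or env (w : seq Sig) a b j : eval env w (fOr a b) j = eval env w a j || eval env w b j.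
Proof. by rewrite /fOr /= negb_and !negbK. Qed.
Lemma eval_fV env M c (w : seq Sig) j : eval env w (fV M c) j = V M c w j.
Proof.
rewrite /fV /V !eval_and eval_or eval_not !eval_bigor !eval_bigand.
rewrite !has_map !all_map.
have E0 : preim (FSym (Sigma:=Sig)) (fun f => eval env w f j) =1 (fun s => isS w s j) by [].
have E1 : preim (fun e => FAnd (fev e) (fGuard M c e)) (fun f => eval env w f j) =1
          (fun e => evh w e j && guard M c w e j).
  move=> e; change (eval env w (FAnd (fev e) (fGuard M c e)) j = evh w e j && guard M c w e j).
  rewrite eval_and eval_fev; congr (_ && _).
  rewrite /fGuard /guard; case: (eeff e) => // r.
  rewrite /fCntEq eval_fLin /= /counter.
  apply/idP/idP => /eqP H; apply/eqP; lia.
have E2 : preim (fCntGe M c) (fun f => eval env w f j) =1 (fun r => 0 <= counter M c w r j).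
  move=> r; change (eval env w (fCntGe M c r) j = (0 <= counter M c w r j)); rewrite /fCntGe eval_fLin /= /counter; apply/idP/idP => H; lia.
have E3 : preim (fBal M) (fun f => eval env w f j) =1 (fun q => 0 <= bal M w q j).
  move=> q; change (eval env w (fBal M q) j = (0 <= bal M w q j)); rewrite /fBal eval_fLin /= /bal; apply/idP/idP => H; lia.
rewrite (eq_has E0) (eq_has E1) (eq_all E2) (eq_all E3).
by rewrite andbA.
Qed.
Lemma eval_phi env M c (w : seq Sig) : eval env w (phi M c) (size w) = acc M c w.
Proof.
rewrite /phi /acc eval_and.
have -> : eval env w (FBox (fV M c)) (size w) = all (V M c w) (iota 1 (size w)).
  exact: (eq_all (fun j => eval_fV env M c w j)).
congr (_ && _); rewrite eval_fLin /= /bal; apply/idP/idP => H; lia.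
Qed.
End EvalLemmas.

Lemma iota1S j : iota 1 j.+1 = rcons (iota 1 j) j.+1.
Proof. have := iotaD 1 j 1; rewrite addn1 cats1 add1n; done. Qed.

Lemma count1S (P : pred nat) j : count P (iota 1 j.+1) = (count P (iota 1 j) + P j.+1)%N.
Proof. by rewrite iota1S -cats1 count_cat /= addn0. Qed.

Lemma lin_step w cf E j :
  lin w cf E j.+1 = lin w cf E j + \sum_(e <- E) cf e * (evh w e j.+1)%:Z.
Proof.
rewrite /lin -big_split /=; apply: eq_bigr => e _.
by rewrite /cnt count1S PoszD mulrDr.
Qed.

Lemma mem_lst L q i e : e \in lst L q i -> eq_ e = q /\ esym e \in instrs.
Proof.
case: i => [r|r t|t] /=; rewrite !inE.
- by move=> /eqP ->.
- by move=> /orP [] /eqP ->.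
- by move=> /eqP ->.
Qed.

Lemma mem_events M e : e \in events M ->
  exists q, [/\ (q < size M)%N, e \in lst (size M) q (nth (MJmp 0) M q) & eq_ e = q].
Proof.
rewrite /events => /flattenP [l /mapP [q Hq ->] He].
exists q; split => //; first by move: Hq; rewrite mem_iota.
by have [] := mem_lst He.
Qed.

Lemma events_mem M q e : (q < size M)%N -> e \in lst (size M) q (nth (MJmp 0) M q) ->
  e \in events M.
Proof.
move=> Hq He; apply/flattenP; exists (lst (size M) q (nth (MJmp 0) M q)) => //.
apply/mapP; exists q => //; by rewrite mem_iota.
Qed.

Lemma isS_uniq w s s' j : isS w s j -> isS w s' j = (s' == s).
Proof.
rewrite /isS => /andP [Hj /eqP E]; rewrite Hj E /=.
apply/eqP/eqP => [[]|->] //.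
Qed.

Lemma sum_lst_sym L q i e0 (cf : ev -> int) : e0 \in lst L q i ->
  \sum_(e <- lst L q i) cf e * (esym e == esym e0)%:Z = cf e0.
Proof.
case: i => [r|r t|t] /=; rewrite ?inE.
- by move=> /eqP ->; rewrite big_cons big_nil /= ?eqxx ?mulr1 ?addr0.
- move=> /orP [] /eqP ->; rewrite !big_cons big_nil /= ?eqxx ?mulr1 ?mulr0 ?addr0 ?add0r //.
- by move=> /eqP ->; rewrite big_cons big_nil /= ?eqxx ?mulr1 ?addr0.
Qed.

Lemma delta_active M w j e0 (cf : ev -> int) : e0 \in events M -> evh w e0 j ->
  \sum_(e <- events M) cf e * (evh w e j)%:Z = cf e0.
Proof.
move=> He0 Hev; have [q0 [Hq0 Hin Heq]] := mem_events He0.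
move: Hev; rewrite /evh => /andP [HS /eqP HSv].
rewrite /events big_flatten /= big_map.
rewrite (bigD1_seq q0) /=; last exact: iota_uniq; last by rewrite mem_iota.
rewrite [\sum_(i <- _ | i != q0) _]big1_seq ?addr0.
- rewrite -(sum_lst_sym cf Hin); apply: eq_big_seq => e He.
  have [Eq _] := mem_lst He.
  by rewrite (isS_uniq _ HS) HSv Heq Eq eqxx andbT.
- move=> q /andP [Hqne _]; apply: big1_seq => e /andP [_ He].
  have [Eq _] := mem_lst He.
  have -> : (Sv w j == (eq_ e)%:Z) = false.
    rewrite HSv Heq Eq; apply/eqP => [[E]]; by rewrite E eqxx in Hqne.
  by rewrite andbF mulr0.
Qed.

Lemma delta_none M w j (cf : ev -> int) : ~~ has (fun s => isS w s j) instrs ->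
  \sum_(e <- events M) cf e * (evh w e j)%:Z = 0.
Proof.
move=> Hn; apply: big1_seq => e /andP [_ He].
have [q [_ Hin _]] := mem_events He; have [_ Hs] := mem_lst Hin.
have -> : evh w e j = false.
  rewrite /evh; apply/negbTE; apply/nandP; left.
  apply: contra Hn => H; by apply/hasP; exists (esym e).
by rewrite mulr0.
Qed.

Definition initS (c : nat) : nat -> nat := fun r => if r == 0%N then c else 0%N.
Lemma init_initS c r : init c r = (initS c r)%:Z.
Proof. by rewrite /init /initS; case: eqP. Qed.

Lemma lin0 w cf E : lin w cf E 0 = 0.
Proof. by rewrite /lin big1 // => e _; rewrite /cnt /= mulr0. Qed.

Lemma effc_le1 r e : effc r e <= 1.
Proof. rewrite /effc; case: (eeff e) => // r'; case: eqP => //. Qed.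

Lemma regs_mem M q r : (q < size M)%N ->
  (nth (MJmp 0) M q = MInc r \/ exists t, nth (MJmp 0) M q = MDec r t) -> r \in regsM M.
Proof.
move=> Hq H; rewrite /regsM; apply/flattenP.
exists (regs_of (nth (MJmp 0) M q)).
  rewrite -(nth_map (MJmp 0) [::] regs_of Hq); apply: mem_nth; by rewrite size_map.
by case: H => [->|[t ->]]; rewrite inE.
Qed.

Lemma lst_reg M q e r : (q < size M)%N -> e \in lst (size M) q (nth (MJmp 0) M q) ->
  (eeff e = EDec r \/ eeff e = EZero r \/ eeff e = EInc r) -> r \in regsM M.
Proof.
move=> Hq; move Hi: (nth (MJmp 0) M q) => i.
case: i Hi => [r'|r' t|t] Hi /=; rewrite !inE.
- move=> /eqP -> /= H.
  have Er : r' = r by case: H => [H|[H|H]]; try discriminate; case: H.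
  subst r'; apply: (regs_mem Hq); by left.
- move=> /orP [] /eqP -> /= H.
  + have Er : r' = r by case: H => [H|[H|H]]; try discriminate; case: H.
    subst r'; apply: (regs_mem Hq); right; by exists t.
  + have Er : r' = r by case: H => [H|[H|H]]; try discriminate; case: H.
    subst r'; apply: (regs_mem Hq); right; by exists t.
- move=> /eqP -> /= H; exfalso; by case: H => [H|[H|H]]; discriminate.
Qed.

Lemma lst_eq_ev L q i e : e \in lst L q i -> eq_ e = q.
Proof. by move=> /mem_lst []. Qed.

Lemma selfloop_noeff L q i e : e \in lst L q i -> etgt e = q -> forall r, effc r e = 0.
Proof.
case: i => [r'|r' t|t] /=; rewrite !inE.
- by move=> /eqP -> /= H; lia.
- move=> /orP [] /eqP -> //= H; lia.
- by move=> /eqP ->.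
Qed.

Lemma step_event M q0 e0 regs : (q0 < size M)%N ->
  e0 \in lst (size M) q0 (nth (MJmp 0) M q0) ->
  (forall r, eeff e0 = EDec r -> (0 < regs r)%N) ->
  (forall r, eeff e0 = EZero r -> regs r = 0%N) ->
  exists regs', stepf M (q0, regs) = Some (etgt e0, regs') /\
    forall r, (regs' r)%:Z = (regs r)%:Z + effc r e0.
Proof.
move=> Hq; rewrite /stepf Hq; move: (nth (MJmp 0) M q0) => i.
case: i => [r0|r0 t|t] /=; rewrite !inE.
- move=> /eqP -> /= _ _; eexists; split; first reflexivity.
  move=> r; rewrite /effc /= updE; do 2?case: eqP => /= ?; subst; lia.
- move=> /orP [] /eqP -> /= Hd Hz.
  + have Hp := Hd r0 erefl. rewrite (negbTE (lt0n_neq0 Hp)).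
    eexists; split; first reflexivity.
    move=> r; rewrite /effc /= updE; do 2?case: eqP => /= ?; subst; lia.
  + rewrite (Hz r0 erefl) eqxx; eexists; split; first reflexivity.
    by move=> r; rewrite /effc /= addr0.
- move=> /eqP -> /= _ _; eexists; split; first reflexivity.
  by move=> r; rewrite /effc /= addr0.
Qed.

Lemma event_of_step M pc regs c' : stepf M (pc, regs) = Some c' ->
  exists e0, [/\ (pc < size M)%N, e0 \in lst (size M) pc (nth (MJmp 0) M pc),
    c'.1 = etgt e0, (forall r, (c'.2 r)%:Z = (regs r)%:Z + effc r e0) &
    (forall r, eeff e0 = EZero r -> regs r = 0%N)].
Proof.
rewrite /stepf; case: ifP => // Hpc.
move: (nth (MJmp 0) M pc) => i.
case: i => [r0|r0 t|t] /= H.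
- case: H => <-; exists (Ev pc sI pc.+1 (EInc r0)); split => //=; first by rewrite inE.
  move=> r; rewrite /effc /= updE; do 2?case: eqP => /= ?; subst; lia.
- move: H; case: eqP => Hz [<-].
  + exists (Ev pc sZ (minn t (size M)) (EZero r0)); split => //=.
    * by rewrite !inE eqxx orbT.
    * by move=> r; rewrite /effc /= addr0.
    * by move=> r [<-].
  + exists (Ev pc sDe pc.+1 (EDec r0)); split => //=.
    * by rewrite !inE eqxx.
    * move=> r; rewrite /effc /= updE; do 2?case: eqP => /= ?; subst; lia.
- case: H => <-; exists (Ev pc sJ (minn t (size M)) ENone); split => //=; first by rewrite inE.
  by move=> r; rewrite /effc /= addr0.
Qed.

Lemma star_snoc M a b c : star M a b -> stepf M b = Some c -> star M a c.
Proof.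
elim=> [x|x y z H _ IH] Hs; first by apply: star_step Hs (star_refl _ _).
apply: star_step H (IH Hs).
Qed.

Lemma bal_step M w q j e0 : e0 \in events M -> evh w e0 j.+1 ->
  bal M w q j.+1 = bal M w q j + balc q e0.
Proof. move=> He Hv; by rewrite /bal lin_step (delta_active _ He Hv) addrA. Qed.

Lemma counter_step M c w r j e0 : e0 \in events M -> evh w e0 j.+1 ->
  counter M c w r j.+1 = counter M c w r j + effc r e0.
Proof. move=> He Hv; by rewrite /counter lin_step (delta_active _ He Hv) addrA. Qed.

Lemma bal_none M w q j : ~~ has (fun s => isS w s j.+1) instrs ->
  bal M w q j.+1 = bal M w q j.
Proof. move=> H; by rewrite /bal lin_step (delta_none _ _ H) addr0. Qed.

Lemma counter_none M c w r j : ~~ has (fun s => isS w s j.+1) instrs ->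
  counter M c w r j.+1 = counter M c w r j.
Proof. move=> H; by rewrite /counter lin_step (delta_none _ _ H) addr0. Qed.

Lemma sound_inv M c w out : out != 0%N -> all (V M c w) (iota 1 (size w)) ->
  forall j, (j <= size w)%N -> exists pc regs, [/\ star M (0%N, initS c) (pc, regs),
     forall q, bal M w q j = (q == pc)%:Z, forall r, counter M c w r j = (regs r)%:Z &
     (regs out <= j)%N].
Proof.
move=> Hout HallV; elim=> [|j IH] Hj.
- exists 0%N, (initS c); split; first exact: star_refl.
  + by move=> q; rewrite /bal lin0 addr0.
  + by move=> r; rewrite /counter lin0 addr0 init_initS.
  + by rewrite /initS (negbTE Hout).
- have [pc [regs [Hst Hbal Hcnt Hro]]] := IH (ltnW Hj).
  have HV : V M c w j.+1 by apply: (allP HallV); rewrite mem_iota; lia.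
  case/and3P: HV => HA HB HC.
  case Hins: (has (fun s => isS w s j.+1) instrs); last first.
    have Hn : ~~ has (fun s => isS w s j.+1) instrs by rewrite Hins.
    exists pc, regs; split => //.
    + by move=> q; rewrite bal_none.
    + by move=> r; rewrite counter_none.
    + lia.
  move: HA; rewrite Hins /= => /hasP [e0 He0 /andP [Hev Hg]].
  have [q0 [Hq0 Hin Heq]] := mem_events He0.
  have HSv : Sv w j.+1 = q0%:Z by move: Hev => /andP [_ /eqP ->]; rewrite Heq.
  case: (eqVneq q0 pc) => [Epc|Npc].
  + subst pc.
    have Hd : forall r, eeff e0 = EDec r -> (0 < regs r)%N.
      move=> r Hr.
      have Hrm : r \in regsM M by apply: (lst_reg Hq0 Hin); left.
      have := allP HB r Hrm; rewrite (counter_step c _ He0 Hev) Hcnt /effc Hr eqxx.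
      move=> H; lia.
    have Hz : forall r, eeff e0 = EZero r -> regs r = 0%N.
      move=> r Hr; move: Hg; rewrite /guard Hr (counter_step c _ He0 Hev) Hcnt /effc Hr.
      move=> /eqP H; lia.
    have [regs' [Hs Hr']] := step_event Hq0 Hin Hd Hz.
    exists (etgt e0), regs'; split.
    * exact: star_snoc Hst Hs.
    * move=> q; rewrite (bal_step _ He0 Hev) Hbal /balc Heq.
      do 3?(case: eqP => /= ?; subst); lia.
    * by move=> r; rewrite (counter_step c _ He0 Hev) Hcnt Hr'.
    * have := Hr' out; have := effc_le1 out e0; lia.
  + have Hself : etgt e0 = q0.
      have Hq0i : q0 \in iota 0 (size M) by rewrite mem_iota.
      have := allP HC q0 Hq0i; rewrite (bal_step _ He0 Hev) Hbal /balc Heq eqxx.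
      rewrite (negbTE Npc) /=.
      case: eqP => // _; lia.
    have Hef := selfloop_noeff Hin Hself.
    exists pc, regs; split => //.
    * move=> q; rewrite (bal_step _ He0 Hev) Hbal /balc Heq Hself subrr addr0 //.
    * by move=> r; rewrite (counter_step c _ He0 Hev) Hcnt Hef addr0.
    * lia.
Qed.

Lemma soundness M c w out : out != 0%N -> acc M c w ->
  exists regs, star M (0%N, initS c) (size M, regs) /\ (regs out <= size w)%N.
Proof.
move=> Hout /andP [HallV Hfin].
have [pc [regs [Hst Hbal _ Hro]]] := sound_inv Hout HallV (leqnn _).
move: Hfin; rewrite Hbal; case: eqP => [E|] //= _; subst pc.
by exists regs.
Qed.

Section Prefix.
Lemma isS_rcons w a s j : (j <= size w)%N -> isS (rcons w a) s j = isS w s j.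
Proof.
move=> Hj; rewrite /isS map_rcons nth_rcons size_map.
case: j Hj => //= j Hj; by rewrite Hj.
Qed.

Lemma isS_last w a s : isS (rcons w a) s (size w).+1 = (a == s).
Proof.
rewrite /isS map_rcons nth_rcons size_map ltnn eqxx /=.
by apply/eqP/eqP => [[]|->].
Qed.

Lemma count_pre (P1 P2 : pred nat) j : (forall i, (0 < i <= j)%N -> P1 i = P2 i) ->
  count P1 (iota 1 j) = count P2 (iota 1 j).
Proof. move=> H; apply: eq_in_count => i; rewrite mem_iota => Hi; apply: H; lia. Qed.

Lemma Sv_rcons w a j : (j <= size w)%N -> Sv (rcons w a) j = Sv w j.
Proof.
move=> Hj; rewrite /Sv; congr (_%:Z - _%:Z); apply: count_pre => i Hi;
  apply: isS_rcons; lia.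
Qed.

Lemma evh_rcons w a e j : (j <= size w)%N -> evh (rcons w a) e j = evh w e j.
Proof. move=> Hj; by rewrite /evh isS_rcons // Sv_rcons. Qed.

Lemma lin_rcons w a cf E j : (j <= size w)%N -> lin (rcons w a) cf E j = lin w cf E j.
Proof.
move=> Hj; rewrite /lin; apply: eq_bigr => e _; rewrite /cnt.
congr (_ * _%:Z); apply: count_pre => i Hi; apply: evh_rcons; lia.
Qed.

Lemma V_rcons M c w a j : (j <= size w)%N -> V M c (rcons w a) j = V M c w j.
Proof.
move=> Hj; rewrite /V /guard /counter /bal.
have E1 : (fun s => isS (rcons w a) s j) =1 (fun s => isS w s j).
  by move=> s; rewrite isS_rcons.
rewrite (eq_has E1).
congr [&& _ || _, _ & _].
- apply: eq_has => e; rewrite evh_rcons //; case: (eeff e) => // r; by rewrite lin_rcons.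
- apply: eq_all => r; by rewrite lin_rcons.
- apply: eq_all => q; by rewrite lin_rcons.
Qed.
End Prefix.

Definition good M c w (s : int) pc regs :=
  [/\ all (V M c w) (iota 1 (size w)), Sv w (size w) = s,
      forall q, bal M w q (size w) = (q == pc)%:Z &
      forall r, counter M c w r (size w) = (regs r)%:Z].

Lemma all_V_rcons M c w a : all (V M c w) (iota 1 (size w)) -> V M c (rcons w a) (size w).+1 ->
  all (V M c (rcons w a)) (iota 1 (size w).+1).
Proof.
move=> H Hl; rewrite iota1S all_rcons Hl /=.
apply/allP => j Hj; rewrite V_rcons; first exact: (allP H).
by move: Hj; rewrite mem_iota; lia.
Qed.

Lemma good_ud M c w s pc regs a : (a == sU) || (a == sD) -> good M c w s pc regs ->
  good M c (rcons w a) (s + (a == sU)%:Z - (a == sD)%:Z) pc regs.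
Proof.
move=> Ha [HV HS Hb Hc].
have Hn : ~~ has (fun s => isS (rcons w a) s (size w).+1) instrs.
  rewrite /= !isS_last; by case/orP: Ha => /eqP ->.
have Hbal : forall q, bal M (rcons w a) q (size w).+1 = (q == pc)%:Z.
  by move=> q; rewrite bal_none // /bal lin_rcons // -/(bal M w q (size w)) Hb.
have Hcnt : forall r, counter M c (rcons w a) r (size w).+1 = (regs r)%:Z.
  by move=> r; rewrite counter_none // /counter lin_rcons // -/(counter M c w r _) Hc.
split; rewrite ?size_rcons //.
- apply: all_V_rcons => //; rewrite /V (negbTE Hn) /=.
  apply/andP; split; apply/allP => x _; by rewrite ?Hbal ?Hcnt.
- have -> : Sv (rcons w a) (size w).+1 =
            Sv (rcons w a) (size w) + (a == sU)%:Z - (a == sD)%:Z.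
    rewrite /Sv !count1S !isS_last !PoszD; lia.
  by rewrite Sv_rcons // HS.
Qed.

Lemma good_adjust M c w s pc regs : good M c w s pc regs ->
  forall t : int, exists w', good M c w' t pc regs.
Proof.
move=> Hg.
have Up : forall n, exists w', good M c w' (s + n%:Z) pc regs.
  elim=> [|n [w' IH]]; first by exists w; rewrite addr0.
  exists (rcons w' sU); have := good_ud (a := sU) isT IH.
  by rewrite eqxx /= subr0 -addrA -PoszD addn1.
have Dn : forall n, exists w', good M c w' (s - n%:Z) pc regs.
  elim=> [|n [w' IH]]; first by exists w; rewrite subr0.
  exists (rcons w' sD); have := good_ud (a := sD) isT IH.
  by rewrite eqxx /= addr0 -addrA -opprD -PoszD addn1.
move=> t; case E: (t - s) => [n|n].
- have [w' H] := Up n; exists w'; have -> : t = s + n%:Z by rewrite -E addrC subrK.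
  exact: H.
- have [w' H] := Dn n.+1; exists w'; have -> : t = s - n.+1%:Z.
    by move: E; rewrite NegzE => E; lia.
  exact: H.
Qed.

Lemma Sv_last w a : Sv (rcons w a) (size w).+1 = Sv w (size w) + (a == sU)%:Z - (a == sD)%:Z.
Proof.
have -> : Sv (rcons w a) (size w).+1 =
          Sv (rcons w a) (size w) + (a == sU)%:Z - (a == sD)%:Z.
  rewrite /Sv !count1S !isS_last !PoszD; lia.
by rewrite Sv_rcons.
Qed.

Lemma instr_not_ud s : s \in instrs -> (s == sU) = false /\ (s == sD) = false.
Proof. by rewrite !inE => /or4P [] /eqP ->. Qed.

Lemma good_step M c w pc regs c' : good M c w pc%:Z pc regs -> stepf M (pc, regs) = Some c' ->
  exists w', good M c w' pc%:Z c'.1 c'.2.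
Proof.
move=> [HV HS Hb Hc] Hst.
have [e0 [Hpc Hin Htgt Hreg Hz]] := event_of_step Hst.
have He0 := events_mem Hpc Hin.
have [Heq Hsym] := mem_lst Hin.
have [HnU HnD] := instr_not_ud Hsym.
set w' := rcons w (esym e0).
have HSv : Sv w' (size w).+1 = pc%:Z by rewrite /w' Sv_last HS HnU HnD subr0 addr0.
have Hev : evh w' e0 (size w).+1 by rewrite /evh isS_last eqxx HSv Heq eqxx.
have Hbal : forall q, bal M w' q (size w).+1 = (q == c'.1)%:Z.
  move=> q; rewrite (bal_step _ He0 Hev) /bal lin_rcons // -/(bal M w q _) Hb /balc Heq Htgt.
  do 3?(case: eqP => /= ?; subst); lia.
have Hcnt : forall r, counter M c w' r (size w).+1 = (c'.2 r)%:Z.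
  move=> r; rewrite (counter_step c _ He0 Hev) /counter lin_rcons // -/(counter M c w r _) Hc.
  by rewrite Hreg.
exists w'; split; rewrite /w' ?size_rcons //.
apply: all_V_rcons => //; rewrite /V.
apply/and3P; split.
- apply/orP; right; apply/hasP; exists e0 => //; rewrite Hev /=.
  rewrite /guard; case E: (eeff e0) => [r|r|r|] //.
  rewrite Hcnt Hreg (Hz r E) /effc E; by [].
- by apply/allP => r _; rewrite Hcnt.
- by apply/allP => q _; rewrite Hbal.
Qed.

Lemma good_run M c a b : star M a b -> forall w, good M c w a.1%:Z a.1 a.2 ->
  exists w', good M c w' b.1%:Z b.1 b.2.
Proof.
elim=> [x|x y z Hs _ IH] w Hg; first by exists w.
case: x Hs Hg => pc regs Hs Hg.
have [w1 H1] := good_step Hg Hs.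
have [w2 H2] := good_adjust H1 y.1%:Z.
exact: IH H2.
Qed.

Lemma completeness M c sfin : star M (0%N, initS c) (size M, sfin) ->
  exists w, acc M c w.
Proof.
move=> Hst.
have Hg0 : good M c [::] 0 0%N (initS c).
  split => //.
  - by move=> q; rewrite /bal lin0 addr0.
  - by move=> r; rewrite /counter lin0 addr0 init_initS.
have [w Hw] := good_run Hst Hg0.
case: Hw => HV _ Hb _; exists w; rewrite /acc HV /= Hb /= eqxx; by [].
Qed.

Local Close Scope ring_scope.

Lemma size_fLin cf E o k : fsize (fLin cf E o k) =
  (sizeT [seq (cf e, TCount (fev e)) | e <- E] + 1 + int_size k)%N.
Proof. by rewrite /fLin size_cmp. Qed.

Lemma int_size_init c r : (int_size (- init c r) <= int_size (init 0 r) + int_size c%:Z)%N.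
Proof. rewrite /int_size /init; case: eqP => _; rewrite ?abszN /=; lia. Qed.

Lemma size_fCntGe M c r : (fsize (fCntGe M c r) <= fsize (fCntGe M 0 r) + int_size c%:Z)%N.
Proof.
rewrite /fCntGe !size_fLin; have := int_size_init c r.
have -> : (- init 0 r)%R = init 0 r by rewrite /init; case: eqP.
lia.
Qed.

Lemma size_fGuard M c e : (fsize (fGuard M c e) <= fsize (fGuard M 0 e) + int_size c%:Z)%N.
Proof.
rewrite /fGuard; case: (eeff e) => [r|r|r|]; try lia.
rewrite /fCntEq !size_fLin; have := int_size_init c r.
have -> : (- init 0 r)%R = init 0 r by rewrite /init; case: eqP.
lia.
Qed.

Lemma size_bigand (T : Type) (F G : T -> Defs.form Sig) l K :
  (forall x, fsize (F x) <= fsize (G x) + K)%N ->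
  (fsize (bigand (map F l)) <= fsize (bigand (map G l)) + size l * K)%N.
Proof.
move=> H; elim: l => [|x l IH] /=; first lia.
have := H x; lia.
Qed.

Lemma size_bigor (T : Type) (F G : T -> Defs.form Sig) l K :
  (forall x, fsize (F x) <= fsize (G x) + K)%N ->
  (fsize (bigor (map F l)) <= fsize (bigor (map G l)) + size l * K)%N.
Proof.
move=> H; elim: l => [|x l IH] /=; first lia.
have := H x; lia.
Qed.

Lemma size_phi M c : (fsize (phi M c) <= fsize (phi M 0) +
   (size (events M) + size (regsM M)) * int_size c%:Z)%N.
Proof.
have H1 := @size_bigor _ (fun e => FAnd (fev e) (fGuard M c e)) (fun e => FAnd (fev e) (fGuard M 0 e))
   (events M) (int_size c%:Z) (fun e => ltac:(have := size_fGuard M c e; simpl; lia)).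
have H2 := @size_bigand _ (fCntGe M c) (fCntGe M 0) (regsM M) (int_size c%:Z) (size_fCntGe M c).
move: H1 H2.
set A1 := fsize (bigor _). set A2 := fsize (bigor _).
set B1 := fsize (bigand _). set B2 := fsize (bigand _).
rewrite /phi /fV.
set Lf := fLin _ _ _ _. set Bq := bigand [seq fBal M q | q <- _].
set I0 := FNot (bigor _).
rewrite /= -/A1 -/A2 -/B1 -/B2 => H1 H2.
rewrite mulnDl; lia.
Qed.

Lemma int_size_pow k : int_size (2 ^ k)%:Z = k.+2.
Proof. by rewrite /int_size /= trunc_expnK. Qed.

Lemma exists_big A B : exists c, (A + B * int_size c%:Z <= c)%N /\ (3 <= c)%N.
Proof.
set t := (A + 2 * B + 4)%N.
exists (2 ^ (t + t))%N; rewrite int_size_pow expnD.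
have Ht := ltn_expl t (isT : 1 < 2)%N.
split; nia.
Qed.

Lemma refs_fLin n cf E o k : refs_ok n (fLin cf E o k).
Proof. rewrite /fLin refs_cmp; by elim: E => //= e E ->. Qed.

Lemma refs_bigand n l : all (refs_ok n) l -> refs_ok n (bigand l).
Proof. by elim: l => //= f l IH /andP [-> /IH]. Qed.
Lemma refs_bigor n l : all (refs_ok n) l -> refs_ok n (bigor l).
Proof. by elim: l => //= f l IH /andP [-> /IH]. Qed.

Lemma refs_and n (a b : Defs.form Sig) : refs_ok n a -> refs_ok n b -> refs_ok n (FAnd a b).
Proof. by move=> /= -> ->. Qed.
Lemma refs_not n (a : Defs.form Sig) : refs_ok n a -> refs_ok n (FNot a).
Proof. by []. Qed.
Lemma refs_box n (a : Defs.form Sig) : refs_ok n a -> refs_ok n (FBox a).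
Proof. by []. Qed.

Lemma refs_phi n M c : refs_ok n (phi M c).
Proof.
rewrite /phi /fV; apply: refs_and; last exact: refs_fLin.
apply: refs_box; apply: refs_and; last first.
  by apply: refs_bigand; rewrite all_map; apply/allP => q _; exact: refs_fLin.
apply: refs_and; last first.
  by apply: refs_bigand; rewrite all_map; apply/allP => r _; exact: refs_fLin.
rewrite /fOr; apply: refs_not; apply: refs_and; apply: refs_not.
  by apply: refs_not; apply: refs_bigor; rewrite all_map; apply/allP => s _.
apply: refs_bigor; rewrite all_map; apply/allP => e _; apply: refs_and => //.
rewrite /fGuard; case: (eeff e) => // r; by rewrite /fCntEq refs_fLin.
Qed.

Lemma accepts_phi M c (w : seq Sig) : accepts [:: phi M c] w = acc M c w.
Proof. exact: eval_phi. Qed.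

Lemma acc_accepts M c (w : seq Sig) : acc M c w -> accepts [:: phi M c] w.
Proof. by rewrite accepts_phi. Qed.
Lemma accepts_acc M c (w : seq Sig) : accepts [:: phi M c] w -> acc M c w.
Proof. by rewrite accepts_phi. Qed.

Definition fRej : Defs.form Sig := FCmp [::] CLt 0%R.

Lemma accepts_rej (w : seq Sig) : accepts [:: fRej] w = false.
Proof. by []. Qed.

Theorem corollary3p6 :
  exists k : nat,
    ~ exists g : nat -> nat,
        computable g /\ length_complexity_bounded_by 'I_k g.
Proof.
exists 6 => -[g [[p Hp] Hb]].
set cmd0 := CSeq (comp_prf p [:: 0] 1 2) (CInc 1).
set M := comp 0 cmd0.
have [c [Hc Hc3]] := exists_big (fsize (phi M 0)) (size (events M) + size (regsM M)).
have [s' [Ex [Out _]]] := comp_prf_spec (Hp c) (ins := [:: 0]) (out := 1) (b := 2) (s := initS c)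
   erefl isT isT.
set sfin := upd s' 1 (s' 1).+1.
have Ecmd : exec cmd0 (initS c) sfin by apply: eSeq Ex (eInc _ _).
have Hstar : star M (0, initS c) (size M, sfin).
  have := exec_star Ecmd (M := M) (o := 0).
  rewrite /M size_comp add0n; apply; split => //.
have [w0 Hw0] := completeness Hstar.
have Hwf : wf_prog [:: phi M c] by rewrite /wf_prog; apply/andP; split => //; rewrite /= andbT; exact: refs_phi.
have Hwf' : wf_prog [:: fRej] by [].
have Hsz : prog_size [:: phi M c] <= c.
  change (fsize (phi M c) + 0 <= c); have := size_phi M c; move: Hc; set K := (_ * _); lia.
have Hsz' : prog_size [:: fRej] <= c by change (3 <= c); lia.
have [w [Hw Hacc]] := Hb c [:: phi M c] [:: fRej] Hwf Hwf' Hsz Hsz'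
   (ex_intro _ w0 (introT andP (conj (acc_accepts Hw0) isT))).
have Hacc' := accepts_acc (proj1 (andP Hacc)).
have [regs [Hst Hro]] := soundness (isT : 1 != 0) Hacc'.
have Hnone : forall s, stepf M (size M, s) = None by move=> s; rewrite /stepf ltnn.
have := star_det Hst Hstar (Hnone _) (Hnone _); case => Er.
move: Hro Hw; rewrite Er /sfin upd_same Out => H1 H2.
have := leq_trans H1 H2; by rewrite ltnn.
Qed.
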